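(* Let $(C,\mathbf A)$, $C\in\mathcal L(\mathcal X,\mathcal Y)$, $\mathbf A=(A_1,\dots,A_d)\in\mathcal L(\mathcal X)^d$, be a contractive pair and let $Q$ be the orthogonal projection of $\mathcal X$ onto $(\operatorname{Ker}\widehat{\mathcal O}_{C,\mathbf A})^\perp$. Then $Q-A_1^*QA_1-\cdots-A_d^*QA_d\ge C^*C$ and $\mathcal G_{C,\mathbf A}\le Q\le I_{\mathcal X}$. Write, with respect to $\mathcal X=\operatorname{Ker}\widehat{\mathcal O}_{C,\mathbf A}\oplus(\operatorname{Ker}\widehat{\mathcal O}_{C,\mathbf A})^\perp$, $$C=\begin{bmatrix}0&C^0\end{bmatrix},\quad A_j=\begin{bmatrix}A_{j1}&A_{j2}\\0&A_j^0\end{bmatrix},\quad Q=\begin{bmatrix}0&0\\0&I\end{bmatrix}\quad(j=1,\dots,d).$$ Then $Q$ satisfies the Stein equation $Q-\sum_{j=1}^dA_j^*QA_j=C^*C$ if and only if $(C^0,\mathbf A^0)=(C^0,(A_1^0,\dots,A_d^0))$ is an isometric pair, in which case also $A_{j2}=0$ (so $(\operatorname{Ker}\widehat{\mathcal O}_{C,\mathbf A})^\perp$ is invariant for $A_j$) for $j=1,\dots,d$.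
   Context: $\mathcal F_d$: free semigroup of words on $\{1,\dots,d\}$; $\mathbf A^v=A_{i_N}\cdots A_{i_1}$ for $v=i_N\cdots i_1$; $\widehat{\mathcal O}_{C,\mathbf A}x=\sum_v(C\mathbf A^vx)z^v\in H^2_{\mathcal Y}(\mathcal F_d)$ (formal power series in noncommuting indeterminates with square-summable coefficients); $\mathcal G_{C,\mathbf A}=\widehat{\mathcal O}_{C,\mathbf A}^*\widehat{\mathcal O}_{C,\mathbf A}=\sum_v(\mathbf A^v)^*C^*C\mathbf A^v$. Contractive pair: $C^*C+\sum_jA_j^*A_j\le I$; isometric pair: equality. *)

(* Defs.v *)
From HB Require Import structures.
From mathcomp Require Import all_boot all_order all_algebra.
From mathcomp Require Import complex.
From mathcomp Require Import reals.
Set Implicit Arguments. Unset Strict Implicit. Unset Printing Implicit Defensive.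
Import Order.TTheory GRing.Theory Num.Theory.
Local Open Scope ring_scope.

Definition is_inner_product (R : realType) (X : lmodType R[i])
    (ip : X -> X -> R[i]) : Prop :=
  [/\ (forall (a : R[i]) (x y z : X), ip (a *: x + y) z = a * ip x z + ip y z),
      (forall x y : X, ip y x = (ip x y)^*),
      (forall x : X, 0 <= ip x x) &
      (forall x : X, ip x x = 0 -> x = 0)].

(* completeness w.r.t. the norm ||x|| = sqrt (ip x x), phrased with squared norms *)
Definition ip_complete (R : realType) (X : lmodType R[i])
    (ip : X -> X -> R[i]) : Prop :=
  forall u : nat -> X,
    (forall e : R[i], 0 < e -> exists N : nat, forall m n : nat,
        (N <= m)%N -> (N <= n)%N -> ip (u m - u n) (u m - u n) < e) ->
    exists l : X, forall e : R[i], 0 < e -> exists N : nat, forall n : nat,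
        (N <= n)%N -> ip (u n - l) (u n - l) < e.

Definition is_hilbert (R : realType) (X : lmodType R[i])
    (ip : X -> X -> R[i]) : Prop :=
  is_inner_product ip /\ ip_complete ip.

Definition is_bounded_op (R : realType) (X Y : lmodType R[i])
    (ipX : X -> X -> R[i]) (ipY : Y -> Y -> R[i]) (T : X -> Y) : Prop :=
  (forall (a : R[i]) (x y : X), T (a *: x + y) = a *: T x + T y) /\
  exists M : R[i], 0 <= M /\ forall x : X, ipY (T x) (T x) <= M * ipX x x.

Definition is_adjoint (R : realType) (X Y : lmodType R[i])
    (ipX : X -> X -> R[i]) (ipY : Y -> Y -> R[i]) (T : X -> Y) (Ts : Y -> X) : Prop :=
  forall (x : X) (y : Y), ipY (T x) y = ipX x (Ts y).

(* word v = i_N ... i_1 is the list [:: i_N; ...; i_1];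
   A^v = A_{i_N} ... A_{i_1} *)
Definition word_op (R : realType) (X : lmodType R[i]) (d : nat)
    (A : 'I_d -> X -> X) (v : seq 'I_d) (x : X) : X :=
  foldr (fun i y => A i y) x v.

(* (A^v)^* = A_{i_1}^* ... A_{i_N}^* *)
Definition word_op_adj (R : realType) (X : lmodType R[i]) (d : nat)
    (As : 'I_d -> X -> X) (v : seq 'I_d) (y : X) : X :=
  foldl (fun z i => As i z) y v.

(* Ker \hat O_{C,A} : all coefficients C A^v x of the power series vanish *)
Definition ker_obs (R : realType) (X Y : lmodType R[i]) (d : nat)
    (C : X -> Y) (A : 'I_d -> X -> X) (x : X) : Prop :=
  forall v : seq 'I_d, C (word_op A v x) = 0.

Definition orth_compl (R : realType) (X : lmodType R[i])
    (ip : X -> X -> R[i]) (S : X -> Prop) (x : X) : Prop :=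
  forall y : X, S y -> ip y x = 0.

Definition is_orth_proj (R : realType) (X : lmodType R[i])
    (ip : X -> X -> R[i]) (S : X -> Prop) (P : X -> X) : Prop :=
  forall x : X, S (P x) /\ (forall y : X, S y -> ip (x - P x) y = 0).

Definition gram_partial (R : realType) (X Y : lmodType R[i]) (d : nat)
    (C : X -> Y) (Cs : Y -> X) (A As : 'I_d -> X -> X) (N : nat) (x : X) : X :=
  \sum_(n < N.+1) \sum_(t : n.-tuple 'I_d)
      word_op_adj As (tval t) (Cs (C (word_op A (tval t) x))).

(* G is G_{C,A} = sum_v (A^v)^* C^* C A^v, the series converging strongly *)
Definition is_gramian (R : realType) (X Y : lmodType R[i]) (d : nat)
    (ipX : X -> X -> R[i]) (C : X -> Y) (Cs : Y -> X) (A As : 'I_d -> X -> X)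
    (G : X -> X) : Prop :=
  forall x : X, forall e : R[i], 0 < e -> exists N0 : nat, forall N : nat,
    (N0 <= N)%N ->
    ipX (gram_partial C Cs A As N x - G x) (gram_partial C Cs A As N x - G x) < e.

Definition op_le (R : realType) (X : lmodType R[i]) (ip : X -> X -> R[i])
    (S T : X -> X) : Prop :=
  forall x : X, 0 <= ip (T x - S x) x.

Definition contractive_pair (R : realType) (X Y : lmodType R[i]) (d : nat)
    (ipX : X -> X -> R[i]) (C : X -> Y) (Cs : Y -> X) (A As : 'I_d -> X -> X) : Prop :=
  op_le ipX (fun x => Cs (C x) + \sum_(j < d) As j (A j x)) (fun x => x).

(* Main.v *)
Require Import Defs.
From HB Require Import structures.
From mathcomp Require Import all_boot all_order all_algebra.
From mathcomp Require Import complex.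
From mathcomp Require Import reals.
From mathcomp Require classical_sets.
From mathcomp Require Import ring lra.
From Stdlib Require ClassicalEpsilon.
Import Order.TTheory GRing.Theory Num.Theory.
Local Open Scope ring_scope.
Set Implicit Arguments.

Module Aux0.
Import classical_sets.


Section Real.
Variable R : realType.

Lemma ge0_realE (x : R[i]) : 0 <= x -> x = (complex.Re x)%:C%C.
Proof. by move=> /ger0_Im; case: x => a b /= ->. Qed.

Lemma mono_cauchy (s : nat -> R[i]) (b : R[i]) :
  (forall n, 0 <= s n) -> (forall m n, (m <= n)%N -> s m <= s n) ->
  (forall n, s n <= b) ->
  forall e, 0 < e -> exists N0, forall m n, (N0 <= m)%N -> (m <= n)%N -> s n - s m < e.
Proof.
move=> hs0 hmon hb e he.
pose r n := complex.Re (s n).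
have sE n : s n = (r n)%:C%C by apply: ge0_realE.
have eE : e = (complex.Re e)%:C%C by apply: ge0_realE; apply: ltW.
have epos : 0 < complex.Re e by rewrite -ltcR -eE.
pose E := (fun y : R => exists n, r n = y).
have rb n : r n <= complex.Re b.
  by have := hb n; rewrite lecE => /andP[_].
have hsup : has_sup E.
  split; first by exists (r 0%N), 0%N.
  by exists (complex.Re b) => y [n <-]; apply: rb.
have [y [N0 <-] hy] := sup_adherent epos hsup.
exists N0 => m n hm hmn.
have h1 : r n <= sup E by apply: sup_upper_bound => //; exists n.
have h2 : r N0 <= r m by rewrite -lecR -!sE; apply: hmon.
rewrite !sE eE -rmorphB ltcR; lra.
Qed.

Lemma ge0_closure (w : R[i]) :
  (forall e : R[i], 0 < e -> exists r, 0 <= r /\ `|w - r| ^+ 2 <= e) -> 0 <= w.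
Proof.
move=> H.
have key : forall e : R, 0 < e -> exists rho : R, 0 <= rho /\
    (complex.Re w - rho) ^+ 2 + (complex.Im w) ^+ 2 <= e.
  move=> e he; have [|r [r0 hr]] := H (e%:C%C); first by rewrite ltcR.
  exists (complex.Re r); split; first by move: r0; rewrite lecE => /andP[].
  move: hr; have d0 := ger0_Im r0.
  case: w {H} => a b; case: r r0 d0 => c d r0 /= ->; simpc.
  rewrite /Normc.normc -expr2 sqr_sqrtr ?addr_ge0 ?sqr_ge0 //.
case: w H key => a b H key /=.
have b0 : b = 0.
  apply/eqP; apply/negP => /negP bn0.
  have bp : 0 < b ^+ 2 by rewrite lt_def sqr_ge0 sqrf_eq0 bn0.
  have [|rho [rho0 hr]] := key (b ^+ 2 / 2); first by lra.
  have : 0 <= (a - rho) ^+ 2 by apply: sqr_ge0.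
  rewrite /= in hr; move: hr bp; generalize ((a - rho) ^+ 2) (b ^+ 2) => u v; lra.
rewrite b0 lecE /= eqxx /=.
rewrite leNgt; apply/negP => an.
have [|rho [rho0 hr]] := key (a ^+ 2 / 2); first by nra.
rewrite /= b0 in hr; nra.
Qed.
End Real.

Section Tup.
Variables (V : nmodType) (d : nat).
Lemma sum_tuple0 (F : seq 'I_d -> V) : \sum_(t : 0.-tuple 'I_d) F t = F [::].
Proof.
rewrite (eq_bigr (fun _ => F [::])); last by move=> t _; rewrite tuple0.
by rewrite sumr_const card_tuple expn0.
Qed.
Lemma sum_tuple_cons n (F : seq 'I_d -> V) :
  \sum_(t : n.+1.-tuple 'I_d) F t = \sum_(t : n.-tuple 'I_d) \sum_(j < d) F (j :: t).
Proof.
rewrite exchange_big pair_big /=.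
rewrite (reindex (fun p : 'I_d * n.-tuple 'I_d => [tuple of p.1 :: p.2])) //=.
exists (fun t : n.+1.-tuple 'I_d => (thead t, [tuple of behead t])).
  by case=> j t _ /=; congr pair; apply: val_inj.
by move=> t _; apply: val_inj; rewrite /= [in RHS](tuple_eta t).
Qed.
End Tup.

End Aux0.
Import Aux0.


Section Cj.
Variable (R : realType).
Implicit Types a b : R[i].
Lemma cjM a b : (a * b)^* = a^* * b^*. Proof. exact: rmorphM. Qed.
Lemma cjV a : (a^-1)^* = (a^*)^-1. Proof. exact: fmorphV. Qed.
Lemma cjD a b : (a + b)^* = a^* + b^*. Proof. exact: rmorphD. Qed.
Lemma cjN a : (- a)^* = - a^*. Proof. exact: rmorphN. Qed.
Lemma cj_sum I (r : seq I) (P : pred I) (F : I -> R[i]) :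
  (\sum_(i <- r | P i) F i)^* = \sum_(i <- r | P i) (F i)^*.
Proof. exact: rmorph_sum. Qed.
Lemma cj0 : (0 : R[i])^* = 0. Proof. exact: rmorph0. Qed.
End Cj.

Section IP.
Variables (R : realType) (V : lmodType R[i]) (ip : V -> V -> R[i]).
Hypothesis hip : is_inner_product ip.

Lemma ipDl x y z : ip (x + y) z = ip x z + ip y z.
Proof. have [h _ _ _] := hip. by have := h 1 x y z; rewrite scale1r mul1r. Qed.
Lemma ip0l z : ip 0 z = 0.
Proof. have h := ipDl 0 0 z; rewrite addr0 in h. by apply: (addrI (ip 0 z)); rewrite addr0 -h. Qed.
Lemma ipZl a x z : ip (a *: x) z = a * ip x z.
Proof. have [h _ _ _] := hip. by have := h a x 0 z; rewrite !addr0 ip0l addr0. Qed.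
Lemma ipNl x z : ip (- x) z = - ip x z.
Proof. by rewrite -scaleN1r ipZl mulN1r. Qed.
Lemma ipBl x y z : ip (x - y) z = ip x z - ip y z.
Proof. by rewrite ipDl ipNl. Qed.
Lemma ip_conj x y : ip y x = (ip x y)^*.
Proof. by have [_ h _ _] := hip. Qed.
Lemma ipDr x y z : ip z (x + y) = ip z x + ip z y.
Proof. by rewrite [LHS]ip_conj ipDl rmorphD [ip z x]ip_conj [ip z y]ip_conj. Qed.
Lemma ip0r z : ip z 0 = 0.
Proof. by rewrite ip_conj ip0l rmorph0. Qed.
Lemma ipNr x z : ip z (- x) = - ip z x.
Proof. by rewrite [LHS]ip_conj ipNl rmorphN [ip z x]ip_conj. Qed.
Lemma ipBr x y z : ip z (x - y) = ip z x - ip z y.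
Proof. by rewrite ipDr ipNr. Qed.
Lemma ipZr a x z : ip z (a *: x) = a^* * ip z x.
Proof. by rewrite [LHS]ip_conj ipZl rmorphM [ip z x]ip_conj. Qed.
Lemma ip_suml I (r : seq I) (P : pred I) (F : I -> V) z :
  ip (\sum_(i <- r | P i) F i) z = \sum_(i <- r | P i) ip (F i) z.
Proof.
elim/big_rec2: _ => [|i a b _ <-]; first exact: ip0l.
by rewrite ipDl.
Qed.
Lemma ip_sumr I (r : seq I) (P : pred I) (F : I -> V) z :
  ip z (\sum_(i <- r | P i) F i) = \sum_(i <- r | P i) ip z (F i).
Proof.
elim/big_rec2: _ => [|i a b _ <-]; first exact: ip0r.
by rewrite ipDr.
Qed.
Lemma ip_ge0 x : 0 <= ip x x.
Proof. by have [_ _ h _] := hip. Qed.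
Lemma ip_eq0 x : ip x x = 0 -> x = 0.
Proof. have [_ _ _ h] := hip. by apply: h. Qed.
Lemma ip_selfconj x : (ip x x)^* = ip x x.
Proof. by rewrite [RHS]ip_conj. Qed.
Lemma ip_oppsq x : ip (- x) (- x) = ip x x.
Proof. by rewrite ipNl ipNr opprK. Qed.
Lemma ip_ext u w : (forall z, ip z u = ip z w) -> u = w.
Proof.
move=> h; apply/eqP; rewrite -subr_eq0; apply/eqP/ip_eq0.
by rewrite ipBr h subrr.
Qed.
Lemma ip_ext_l u w : (forall z, ip u z = ip w z) -> u = w.
Proof. by move=> h; apply: ip_ext => z; rewrite [LHS]ip_conj h [RHS]ip_conj. Qed.

Lemma ip_pyth p k : ip p k = 0 -> ip (p + k) (p + k) = ip p p + ip k k.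
Proof.
move=> h; rewrite ipDl !ipDr h [ip k p]ip_conj h cj0 addr0 add0r.
by [].
Qed.

Lemma ip_CS z x : `|ip z x| ^+ 2 <= ip z z * ip x x.
Proof.
have [->|nx0] := eqVneq x 0; first by rewrite ip0r normr0 expr0n /= ip0l mulr0.
have xpos : 0 < ip x x.
  by rewrite lt_def ip_ge0 andbT; apply/eqP => /ip_eq0; apply/eqP.
set c := ip z x; set n := ip x x.
have h := ip_ge0 (z - (c / n) *: x).
rewrite ipBl !ipBr !ipZl !ipZr -/c -/n [ip x z]ip_conj -/c in h.
rewrite cjM cjV ip_selfconj -/n in h.
rewrite normCK -ler_pdivrMr //.
have e : ip z z - c^* / n * c - (c / n * c^* - c / n * (c^* / n * n)) = ip z z - c * c^* / n.
  by field; apply: lt0r_neq0.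
by rewrite e subr_ge0 in h.
Qed.
End IP.


Section Lin.
Variables (R : realType) (U W : lmodType R[i]) (T : U -> W).
Hypothesis hT : forall (a : R[i]) x y, T (a *: x + y) = a *: T x + T y.
Lemma linD x y : T (x + y) = T x + T y.
Proof. by have := hT 1 x y; rewrite !scale1r. Qed.
Lemma lin0 : T 0 = 0.
Proof. by have h := linD 0 0; rewrite addr0 in h; apply: (addrI (T 0)); rewrite addr0 -h. Qed.
Lemma linZ a x : T (a *: x) = a *: T x.
Proof. by have := hT a x 0; rewrite !addr0 lin0 addr0. Qed.
Lemma linN x : T (- x) = - T x.
Proof. by rewrite -scaleN1r linZ scaleN1r. Qed.
Lemma linB x y : T (x - y) = T x - T y.
Proof. by rewrite linD linN. Qed.
Lemma lin_sum I (r : seq I) (P : pred I) (F : I -> U) :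
  T (\sum_(i <- r | P i) F i) = \sum_(i <- r | P i) T (F i).
Proof. elim/big_rec2: _ => [|i a b _ <-]; [exact: lin0 | exact: linD]. Qed.
End Lin.
Arguments linD {R U W T} hT x y.
Arguments lin0 {R U W T} hT.
Arguments linZ {R U W T} hT a x.
Arguments linN {R U W T} hT x.
Arguments linB {R U W T} hT x y.
Arguments lin_sum {R U W T} hT {I} r P F.

Section Main.
Variables (R : realType) (X Y : lmodType R[i])
  (ipX : X -> X -> R[i]) (ipY : Y -> Y -> R[i]).
Hypotheses (hX : is_hilbert ipX) (hY : is_hilbert ipY).
Variables (d : nat) (C : X -> Y) (Cs : Y -> X) (A As : 'I_d -> X -> X).
Hypotheses (hC : is_bounded_op ipX ipY C) (hCs : is_adjoint ipX ipY C Cs)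
  (hA : forall j, is_bounded_op ipX ipX (A j))
  (hAs : forall j, is_adjoint ipX ipX (A j) (As j))
  (hcontr : contractive_pair ipX C Cs A As).
Variable (Q : X -> X).
Hypothesis (hQ : is_orth_proj ipX (orth_compl ipX (ker_obs C A)) Q).

Let hipX : is_inner_product ipX := hX.1.
Let hipY : is_inner_product ipY := hY.1.
Let Clin := hC.1.
Let Alin j := (hA j).1.
Local Notation nX x := (ipX x x).
Local Notation nY y := (ipY y y).
Local Notation K := (ker_obs C A).
Local Notation Kp := (orth_compl ipX (ker_obs C A)).

Lemma ipCs_r x y : ipX x (Cs y) = ipY (C x) y.
Proof. by rewrite hCs. Qed.
Lemma ipCs_l x y : ipX (Cs y) x = ipY y (C x).
Proof. by rewrite [LHS](ip_conj hipX) ipCs_r [RHS](ip_conj hipY). Qed.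
Lemma ipAs_r j x y : ipX x (As j y) = ipX (A j x) y.
Proof. by rewrite hAs. Qed.
Lemma ipAs_l j x y : ipX (As j y) x = ipX y (A j x).
Proof. by rewrite [LHS](ip_conj hipX) ipAs_r [RHS](ip_conj hipX). Qed.

Lemma word_cons i v x : word_op A (i :: v) x = A i (word_op A v x).
Proof. by []. Qed.
Lemma word_rcons v i x : word_op A (rcons v i) x = word_op A v (A i x).
Proof. by rewrite /word_op foldr_rcons. Qed.
Lemma word_lin v : forall (a : R[i]) x y,
  word_op A v (a *: x + y) = a *: word_op A v x + word_op A v y.
Proof. by elim: v => [//|i v IH] a x y; rewrite !word_cons IH Alin. Qed.
Lemma adj_word v : forall x y,
  ipX x (word_op_adj As v y) = ipX (word_op A v x) y.
Proof.
elim: v => [//|i v IH] x y.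
by rewrite /word_op_adj /= -/(word_op_adj As v (As i y)) IH ipAs_r.
Qed.
Lemma adj_word_l v x y :
  ipX (word_op_adj As v y) x = ipX y (word_op A v x).
Proof. by rewrite [LHS](ip_conj hipX) adj_word [RHS](ip_conj hipX). Qed.

Lemma CW_lin v : forall (a : R[i]) x y,
  C (word_op A v (a *: x + y)) = a *: C (word_op A v x) + C (word_op A v y).
Proof. by move=> a x y; rewrite word_lin Clin. Qed.

Lemma K_lin a x y : K x -> K y -> K (a *: x + y).
Proof. by move=> hx hy v; rewrite CW_lin hx hy scaler0 addr0. Qed.
Lemma K0 : K 0.
Proof. by move=> v; rewrite (lin0 (word_lin v)) (lin0 Clin). Qed.
Lemma K_D x y : K x -> K y -> K (x + y).
Proof. by move=> hx hy; rewrite -[x]scale1r; apply: K_lin. Qed.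
Lemma K_N x : K x -> K (- x).
Proof. by move=> hx; rewrite -scaleN1r -[_ *: x]addr0; apply: K_lin => //; apply: K0. Qed.
Lemma K_B x y : K x -> K y -> K (x - y).
Proof. by move=> hx hy; apply: K_D => //; apply: K_N. Qed.
Lemma KA j x : K x -> K (A j x).
Proof. by move=> hx v; rewrite -word_rcons. Qed.
Lemma KC x : K x -> C x = 0.
Proof. by move=> hx; exact: (hx [::]). Qed.

Lemma Kp_lin a x y : Kp x -> Kp y -> Kp (a *: x + y).
Proof.
by move=> hx hy k hk; rewrite (ipDr hipX) (ipZr hipX) hx // hy // mulr0 addr0.
Qed.
Lemma Kp0 : Kp 0.
Proof. by move=> k _; rewrite (ip0r hipX). Qed.
Lemma Kp_D x y : Kp x -> Kp y -> Kp (x + y).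
Proof. by move=> hx hy; rewrite -[x]scale1r; apply: Kp_lin. Qed.
Lemma Kp_N x : Kp x -> Kp (- x).
Proof. by move=> hx; rewrite -scaleN1r -[_ *: x]addr0; apply: Kp_lin => //; apply: Kp0. Qed.
Lemma Kp_B x y : Kp x -> Kp y -> Kp (x - y).
Proof. by move=> hx hy; apply: Kp_D => //; apply: Kp_N. Qed.
Lemma KKp0 x : K x -> Kp x -> x = 0.
Proof. by move=> hk hkp; apply: (ip_eq0 hipX); apply: hkp. Qed.
Lemma Kp_ortho x k : Kp x -> K k -> ipX x k = 0.
Proof. by move=> hx hk; rewrite (ip_conj hipX) hx // cj0. Qed.

Lemma KppK z : (forall y, Kp y -> ipX z y = 0) -> K z.
Proof.
move=> hz v.
set w := word_op_adj As v (Cs (C (word_op A v z))).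
have hw : Kp w.
  by move=> k hk; rewrite /w adj_word ipCs_r hk (ip0l hipY).
have := hz w hw; rewrite /w adj_word ipCs_r.
exact: (ip_eq0 hipY).
Qed.

Lemma QKp x : Kp (Q x). Proof. by case: (hQ x). Qed.
Lemma QK x : K (x - Q x).
Proof. by apply: KppK; case: (hQ x). Qed.
Lemma Q_uniq x y : Kp y -> K (x - y) -> Q x = y.
Proof.
move=> hy hk; apply/eqP; rewrite -subr_eq0; apply/eqP; apply: KKp0.
  have -> : Q x - y = (x - y) - (x - Q x) by rewrite opprB [RHS]addrC addrA subrK.
  by apply: K_B => //; apply: QK.
by apply: Kp_B => //; apply: QKp.
Qed.
Lemma Qlin a x y : Q (a *: x + y) = a *: Q x + Q y.
Proof.
apply: Q_uniq; first by apply: Kp_lin; apply: QKp.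
have -> : a *: x + y - (a *: Q x + Q y) = a *: (x - Q x) + (y - Q y).
  by rewrite scalerBr opprD !addrA; congr (_ + _); rewrite addrAC.
by apply: K_lin; apply: QK.
Qed.
Lemma Q_Kp x : Kp x -> Q x = x.
Proof. by move=> hx; apply: Q_uniq => //; rewrite subrr; apply: K0. Qed.
Lemma Q_K x : K x -> Q x = 0.
Proof. by move=> hx; apply: Q_uniq; [apply: Kp0 | rewrite subr0]. Qed.
Lemma QQ x : Q (Q x) = Q x.
Proof. exact/Q_Kp/QKp. Qed.
Lemma ipQl x y : ipX (Q x) y = ipX (Q x) (Q y).
Proof.
have -> : ipX (Q x) y = ipX (Q x) (Q y + (y - Q y)) by rewrite addrC subrK.
by rewrite (ipDr hipX) (Kp_ortho (QKp x) (QK y)) addr0.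
Qed.
Lemma ipQr x y : ipX x (Q y) = ipX (Q x) (Q y).
Proof. by rewrite (ip_conj hipX) ipQl -(ip_conj hipX). Qed.
Lemma nX_split x : nX x = nX (Q x) + nX (x - Q x).
Proof.
have e : x = Q x + (x - Q x) by rewrite addrC subrK.
rewrite {1 2}e; apply: (ip_pyth hipX); exact: (Kp_ortho (QKp x) (QK x)).
Qed.
Lemma nQle x : nX (Q x) <= nX x.
Proof. by rewrite [leRHS]nX_split lerDl (ip_ge0 hipX). Qed.

Lemma contr_exp p : nY (C p) + \sum_(j < d) nX (A j p) <= nX p.
Proof.
have := hcontr p; rewrite (ipBl hipX) (ipDl hipX) (ip_suml hipX) ipCs_l subr_ge0.
by under eq_bigr do rewrite ipAs_l.
Qed.

Lemma claim1' u : nY (C u) + \sum_(j < d) nX (Q (A j u)) <= nX (Q u).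
Proof.
set p := Q u.
have hk : K (u - p) := QK u.
have Cu : C u = C p.
  by rewrite -{1}[u](subrK p) (linD Clin) (KC hk) add0r.
have QAu j : Q (A j u) = Q (A j p).
  rewrite -{1}[u](subrK p) (linD (Alin j)) (linD Qlin) (Q_K (KA j hk)).
  by rewrite add0r.
rewrite Cu; under eq_bigr do rewrite QAu.
apply: le_trans (contr_exp p); rewrite lerD2l; apply: ler_sum => j _.
exact: nQle.
Qed.

Lemma claim1 : op_le ipX (fun x => Cs (C x))
  (fun x => Q x - \sum_(j < d) As j (Q (A j x))).
Proof.
move=> x /=.
rewrite !(ipBl hipX) (ip_suml hipX) ipCs_l ipQl.
under eq_bigr do rewrite ipAs_l ipQl.
rewrite -addrA -opprD subr_ge0 addrC; exact: claim1'.
Qed.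

Lemma claim3 : op_le ipX Q (fun x => x).
Proof.
move=> x /=.
have -> : ipX (x - Q x) x = ipX (x - Q x) (x - Q x) + ipX (x - Q x) (Q x).
  by rewrite -(ipDr hipX) subrK.
by rewrite [X in _ + X](ip_conj hipX) (Kp_ortho (QKp x) (QK x)) cj0 addr0 (ip_ge0 hipX).
Qed.

Lemma ipQsym w y : ipX (Q w) y = ipX w (Q y).
Proof. by rewrite ipQl [RHS]ipQr. Qed.

Definition stein := forall x, Q x - \sum_(j < d) As j (Q (A j x)) = Cs (C x).
Definition isom := forall x, Kp x ->
  Q (Cs (C x)) + \sum_(j < d) Q (As j (Q (A j x))) = x.

Lemma stein_isom : stein -> isom.
Proof.
move=> S x hx; have := f_equal Q (S x).
rewrite (linB Qlin) (lin_sum Qlin) QQ (Q_Kp hx) => <-.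
by rewrite subrK.
Qed.

Lemma isom_inv : isom -> forall j x, Kp x -> A j x - Q (A j x) = 0.
Proof.
move=> I j x hx.
have e := f_equal (fun z => ipX z x) (I x hx); rewrite /= in e.
rewrite (ipDl hipX) (ip_suml hipX) ipQsym (Q_Kp hx) ipCs_l in e.
move: e; under eq_bigr do rewrite ipQsym (Q_Kp hx) ipAs_l ipQl; move=> e.
have c := contr_exp x.
move: c; under eq_bigr do rewrite nX_split; move=> c.
rewrite big_split /= -e addrA gerDl in c.
have s0 : \sum_(i < d) nX (A i x - Q (A i x)) = 0.
  by apply/le_anti; rewrite c sumr_ge0 // => i _; apply: (ip_ge0 hipX).
apply: (ip_eq0 hipX).
by apply: (psumr_eq0P _ s0) => // i _; apply: (ip_ge0 hipX).
Qed.

Lemma isom_stein : isom -> stein.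
Proof.
move=> I x; set p := Q x.
have hk : K (x - p) := QK x.
have hp : Kp p := QKp x.
have QAp j : Q (A j p) = A j p.
  by apply/esym/eqP; rewrite -subr_eq0; apply/eqP; apply: isom_inv.
have QAx j : Q (A j x) = A j p.
  rewrite -{1}[x](subrK p) (linD (Alin j)) (linD Qlin) (Q_K (KA j hk)).
  by rewrite add0r QAp.
have Cx : C x = C p.
  by rewrite -{1}[x](subrK p) (linD Clin) (KC hk) add0r.
under eq_bigr do rewrite QAx.
rewrite Cx.
set T := p - Cs (C p) - \sum_(j < d) As j (A j p).
have hT : Kp T.
  move=> k hk'; rewrite /T !(ipBr hipX) (ip_sumr hipX) ipCs_r (KC hk') (ip0l hipY).
  rewrite (hp k hk') subr0 big1 ?subr0 // => j _.
  by rewrite ipAs_r -QAp; apply: QKp; apply: KA.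
have QT : Q T = 0.
  rewrite /T !(linB Qlin) (lin_sum Qlin) QQ.
  under eq_bigr do rewrite -{1}QAp.
  by rewrite -addrA -opprD (I p hp) subrr.
have T0 : T = 0 by rewrite -QT (Q_Kp hT).
by apply/eqP; rewrite -subr_eq0 addrAC -/T T0.
Qed.

Definition aN n x := \sum_(t : n.-tuple 'I_d) nY (C (word_op A t x)).
Definition bN n x := \sum_(t : n.-tuple 'I_d) nX (Q (word_op A t x)).
Definition SN N x := \sum_(n < N.+1) aN n x.
Definition bf n y z :=
  \sum_(t : n.-tuple 'I_d) ipY (C (word_op A t y)) (C (word_op A t z)).

Lemma step n x : aN n x + bN n.+1 x <= bN n x.
Proof.
rewrite /bN (@sum_tuple_cons _ d n (fun s => nX (Q (word_op A s x)))) /aN -big_split /=; apply: ler_sum => t _.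
exact: claim1'.
Qed.
Lemma aN_ge0 n x : 0 <= aN n x.
Proof. by apply: sumr_ge0 => t _; apply: (ip_ge0 hipY). Qed.
Lemma bN_ge0 n x : 0 <= bN n x.
Proof. by apply: sumr_ge0 => t _; apply: (ip_ge0 hipX). Qed.
Lemma tele N x : SN N x + bN N.+1 x <= nX (Q x).
Proof.
elim: N => [|N IH].
  have b0 : bN 0 x = nX (Q x) by rewrite /bN (@sum_tuple0 _ d (fun s => nX (Q (word_op A s x)))).
  by rewrite /SN big_ord1 -b0; apply: step.
rewrite /SN big_ord_recr /= -/(SN N x); apply: le_trans IH.
by rewrite -addrA lerD2l; apply: step.
Qed.
Lemma SN_le N x : SN N x <= nX (Q x).
Proof. by apply: le_trans _ (tele N x); rewrite lerDl bN_ge0. Qed.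
Lemma SN_ge0 N x : 0 <= SN N x.
Proof. by apply: sumr_ge0 => n _; apply: aN_ge0. Qed.
Lemma SN_mono N M x : (N <= M)%N -> SN N x <= SN M x.
Proof.
move/subnK => <-; elim: (M - N)%N => [//|k IH].
apply: le_trans IH _; rewrite addSn /SN [leRHS]big_ord_recr /= lerDl.
exact: aN_ge0.
Qed.

Lemma ip_gram N x z : ipX (gram_partial C Cs A As N x) z = \sum_(n < N.+1) bf n x z.
Proof.
rewrite /gram_partial (ip_suml hipX); apply: eq_bigr => n _.
rewrite (ip_suml hipX); apply: eq_bigr => t _.
by rewrite adj_word_l ipCs_l.
Qed.

Lemma bf_B1 n y y' z : bf n (y - y') z = bf n y z - bf n y' z.
Proof.
rewrite /bf -sumrB; apply: eq_bigr => t _.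
by rewrite (linB (CW_lin t)) (ipBl hipY).
Qed.
Lemma bf_B2 n y z z' : bf n y (z - z') = bf n y z - bf n y z'.
Proof.
rewrite /bf -sumrB; apply: eq_bigr => t _.
by rewrite (linB (CW_lin t)) (ipBr hipY).
Qed.
Lemma bf_conj n y z : bf n z y = (bf n y z)^*.
Proof. by rewrite /bf cj_sum; apply: eq_bigr => t _; apply: (ip_conj hipY). Qed.

Local Notation gp N x := (gram_partial C Cs A As N x).

Lemma gram_diff N M x : (N <= M)%N -> nX (gp M x - gp N x) <= SN M x - SN N x.
Proof.
move=> hNM.
pose B y z := \sum_(n < M.+1) bf n y z - \sum_(n < N.+1) bf n y z.
have ipu y z : ipX (gp M y - gp N y) z = B y z by rewrite (ipBl hipX) !ip_gram.
have B1 y y' z : B (y - y') z = B y z - B y' z.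
  have bs K' : \sum_(n < K') bf n (y - y') z =
      \sum_(n < K') bf n y z - \sum_(n < K') bf n y' z.
    by rewrite -sumrB; apply: eq_bigr => n _; apply: bf_B1.
  rewrite /B !bs; ring.
have B2 y z z' : B y (z - z') = B y z - B y z'.
  have bs K' : \sum_(n < K') bf n y (z - z') =
      \sum_(n < K') bf n y z - \sum_(n < K') bf n y z'.
    by rewrite -sumrB; apply: eq_bigr => n _; apply: bf_B2.
  rewrite /B !bs; ring.
have Bc y z : B z y = (B y z)^*.
  rewrite /B cjD cjN !cj_sum; congr (_ - _); apply: eq_bigr => n _; apply: bf_conj.
have BS y : B y y = SN M y - SN N y by [].
set u := gp M x - gp N x.
have Bxu : B x u = nX u by rewrite -ipu.
have Bux : B u x = nX u by rewrite Bc Bxu (ip_selfconj hipX).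
have Buu : B u u <= nX u.
  rewrite BS lerBlDr; apply: le_trans (SN_le M u) _.
  by apply: le_trans (nQle u) _; rewrite lerDl SN_ge0.
clearbody u.
have h : 0 <= B (x - u) (x - u) by rewrite BS subr_ge0 SN_mono.
rewrite B1 !B2 Bxu Bux subr_ge0 in h.
rewrite -BS -subr_ge0; apply: le_trans h; rewrite subr_ge0 //.
Qed.

Lemma gram_lim x : exists l : X, forall e : R[i], 0 < e -> exists N : nat,
  forall n : nat, (N <= n)%N -> nX (gp n x - l) < e.
Proof.
apply: hX.2 => e he.
have [N0 hN0] := @mono_cauchy R (fun N => SN N x) (nX x) (fun n => SN_ge0 n x)
  (fun m n h => SN_mono m n x h) (fun n => le_trans (SN_le n x) (nQle x)) e he.
exists N0 => m n hm hn; case: (leqP m n) => hmn.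
  rewrite -opprB (ip_oppsq hipX); apply: le_lt_trans (gram_diff m n x hmn) _.
  exact: hN0.
apply: le_lt_trans (gram_diff n m x (ltnW hmn)) _; exact: hN0 _ _ hn (ltnW hmn).
Qed.

Lemma GleQ (G : X -> X) : is_gramian ipX C Cs A As G -> op_le ipX G Q.
Proof.
move=> hG x /=; apply: ge0_closure => e he.
set n := nX x.
have n0 : 0 <= n := ip_ge0 hipX x.
have n1 : 0 < 1 + n := ltr_wpDr n0 ltr01.
have e'pos : 0 < e / (1 + n) by rewrite divr_gt0.
have [N hN] := hG x _ e'pos.
have hNN := hN N (leqnn N).
exists (ipX (Q x - gp N x) x); split.
  rewrite (ipBl hipX) ipQl ip_gram subr_ge0; exact: (SN_le N x).
have -> : ipX (Q x - G x) x - ipX (Q x - gp N x) x = ipX (gp N x - G x) x.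
  by rewrite !(ipBl hipX); ring.
apply: le_trans (ip_CS hipX _ _) _.
apply: le_trans (ler_wpM2r n0 (ltW hNN)) _.
rewrite [leRHS](_ : e = e / (1 + n) * (1 + n)); last by rewrite divfK // lt0r_neq0.
by apply: ler_wpM2l; [exact: ltW | rewrite lerDr ler01].
Qed.

Lemma main_sec :
  op_le ipX (fun x => Cs (C x)) (fun x => Q x - \sum_(j < d) As j (Q (A j x)))
  /\ (exists G : X -> X, is_gramian ipX C Cs A As G /\ op_le ipX G Q)
  /\ op_le ipX Q (fun x => x)
  /\ ((forall x : X, Q x - \sum_(j < d) As j (Q (A j x)) = Cs (C x)) <->
      (forall x : X, orth_compl ipX (ker_obs C A) x ->
         Q (Cs (C x)) + \sum_(j < d) Q (As j (Q (A j x))) = x))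
  /\ ((forall x : X, Q x - \sum_(j < d) As j (Q (A j x)) = Cs (C x)) ->
      forall (j : 'I_d) (x : X), orth_compl ipX (ker_obs C A) x ->
         A j x - Q (A j x) = 0).
Proof.
split; first exact: claim1.
split.
  pose G x := proj1_sig (ClassicalEpsilon.constructive_indefinite_description _ (gram_lim x)).
  have hG : is_gramian ipX C Cs A As G.
    by move=> x; rewrite /G; case: (ClassicalEpsilon.constructive_indefinite_description _ _).
  by exists G; split => //; apply: GleQ.
split; first exact: claim3.
split; first by split; [apply: stein_isom | apply: isom_stein].
by move=> S; apply: isom_inv; apply: stein_isom.
Qed.
End Main.


Unset Implicit Arguments.

Theorem proposition2p12
  (R : realType) (X Y : lmodType R[i])
  (ipX : X -> X -> R[i]) (ipY : Y -> Y -> R[i])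
  (hX : is_hilbert ipX) (hY : is_hilbert ipY)
  (d : nat) (C : X -> Y) (Cs : Y -> X) (A As : 'I_d -> X -> X)
  (hC : is_bounded_op ipX ipY C) (hCs : is_adjoint ipX ipY C Cs)
  (hA : forall j, is_bounded_op ipX ipX (A j))
  (hAs : forall j, is_adjoint ipX ipX (A j) (As j))
  (hcontr : contractive_pair ipX C Cs A As)
  (Q : X -> X)
  (hQ : is_orth_proj ipX (orth_compl ipX (ker_obs C A)) Q) :
  (* Q - sum_j A_j^* Q A_j >= C^* C *)
  op_le ipX (fun x => Cs (C x)) (fun x => Q x - \sum_(j < d) As j (Q (A j x)))
  (* G_{C,A} <= Q <= I *)
  /\ (exists G : X -> X, is_gramian ipX C Cs A As G /\ op_le ipX G Q)
  /\ op_le ipX Q (fun x => x)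
  /\ ((forall x : X, Q x - \sum_(j < d) As j (Q (A j x)) = Cs (C x)) <->
      (forall x : X, orth_compl ipX (ker_obs C A) x ->
         Q (Cs (C x)) + \sum_(j < d) Q (As j (Q (A j x))) = x))
  /\ ((forall x : X, Q x - \sum_(j < d) As j (Q (A j x)) = Cs (C x)) ->
      forall (j : 'I_d) (x : X), orth_compl ipX (ker_obs C A) x ->
         A j x - Q (A j x) = 0).
Proof. exact: (main_sec hX hY hC hCs hA hAs hcontr hQ). Qed.
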